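(* Let $1\le\ell\le n$. For every $u\in\mathbb{R}^{\binom{n}{\ell}}$, $\|\mathbf{V}(u)\|_F^2\le \ell^2\|u\|^4$.
   Context: Vectors in $\mathbb{R}^{\binom{n}{\ell}}$ are indexed by subsets $S\subseteq[n]$ with $|S|=\ell$. The voting matrix $\mathbf{V}(u)$ is the symmetric $n\times n$ matrix with $\mathbf{V}_{ii}(u)=0$ and, for $i\ne j$, $\mathbf{V}_{ij}(u)=\frac12\sum_{|S|=|T|=\ell} u_Su_T\mathbf{1}_{S\triangle T=\{i,j\}}$. $\|\cdot\|_F$ is the Frobenius norm. *)

(* Defs.v *)
From mathcomp Require Import all_boot all_order all_algebra.
Set Implicit Arguments. Unset Strict Implicit. Unset Printing Implicit Defensive.
Import Order.TTheory GRing.Theory Num.Theory.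
Local Open Scope ring_scope.

(* The index set of R^{binom n l}: l-element subsets of [n] = 'I_n. *)
Definition lsubset (n l : nat) := {S : {set 'I_n} | #|S| == l}.

Definition lvec (R : numDomainType) (n l : nat) := {ffun lsubset n l -> R}.

Definition sqnorm (R : numDomainType) n l (u : lvec R n l) : R :=
  \sum_(S : lsubset n l) u S ^+ 2.

Definition voting (R : numFieldType) n l (u : lvec R n l) : 'M[R]_n :=
  \matrix_(i < n, j < n)
    (if i == j then 0
     else 2^-1 * \sum_(S : lsubset n l) \sum_(T : lsubset n l)
            (if (val S :\: val T) :|: (val T :\: val S) == [set i; j]
             then u S * u T else 0)).

Definition frob2 (R : numDomainType) n (A : 'M[R]_n) : R :=
  \sum_(i < n) \sum_(j < n) A i j ^+ 2.

(* Main.v *)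
Require Import Defs.
From mathcomp Require Import all_boot all_order all_algebra.
From mathcomp Require Import ring lra.
Set Implicit Arguments. Unset Strict Implicit. Unset Printing Implicit Defensive.
Import Order.TTheory GRing.Theory Num.Theory.
Local Open Scope ring_scope.

Section Aux.
Variable R : realFieldType.

Lemma cauchy_schwarz (I : finType) (x y : I -> R) :
  (\sum_i x i * y i) ^+ 2 <= (\sum_i x i ^+ 2) * (\sum_i y i ^+ 2).
Proof.
rewrite -subr_ge0.
have H : (\sum_i x i ^+ 2) * (\sum_i y i ^+ 2) - (\sum_i x i * y i) ^+ 2
   = 2^-1 * \sum_i \sum_j (x i * y j - x j * y i) ^+ 2.
  have E : \sum_i \sum_j (x i * y j - x j * y i) ^+ 2 =
     \sum_i \sum_j (x i ^+2 * y j ^+ 2) + \sum_i \sum_j (x j ^+2 * y i ^+ 2)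
     - 2 * \sum_i \sum_j (x i * y i * (x j * y j)).
    rewrite -big_split mulr_sumr -sumrB /=; apply: eq_bigr => i _.
    rewrite -big_split mulr_sumr -sumrB /=; apply: eq_bigr => j _.
    ring.
  rewrite E [\sum_i \sum_j x j ^+ 2 * _]exchange_big /=.
  rewrite -!big_distrlr /= expr2.
  field.
  by [].
rewrite H mulr_ge0 // ?invr_ge0 ?ler0n //.
by apply: sumr_ge0 => i _; apply: sumr_ge0 => j _; apply: sqr_ge0.
Qed.


End Aux.

Section Sets.
Variable R : realFieldType.
Variable n : nat.
Implicit Types (S T A X : {set 'I_n}).

Definition sd S T := (S :\: T) :|: (T :\: S).

Lemma sd_eq S T X : (sd S T == X) = (T == sd S X).
Proof.
apply/eqP/eqP => [<-|->]; apply/setP => x; rewrite !inE.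
  all: by case: (x \in S); case: (x \in T); case: (x \in X).
Qed.

Lemma sum_sd S X (F : {set 'I_n} -> R) :
  \sum_T (if sd S T == X then F T else 0) = F (sd S X).
Proof.
rewrite (bigD1 (sd S X)) //= sd_eq eqxx big1 ?addr0 // => T HT.
by rewrite sd_eq (negbTE HT).
Qed.

Lemma reindex1 (i : 'I_n) (F : {set 'I_n} -> R) :
  \sum_(S : {set 'I_n} | i \in S) F S = \sum_(A : {set 'I_n} | i \notin A) F (i |: A).
Proof.
rewrite (reindex_onto (fun A => i |: A) (fun S => S :\ i)) /=; last first.
  by move=> S HS; rewrite setD1K.
apply: eq_bigl => A; rewrite setU11 /=.
case: (boolP (i \in A)) => HA.
  apply/negbTE/eqP => E; move: HA; rewrite -E !inE eqxx //.
by rewrite setU1K // eqxx.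
Qed.

End Sets.

Lemma sum_lsub (R : realFieldType) n l (F : {set 'I_n} -> R) :
  \sum_(s : lsubset n l) F (val s) = \sum_(S : {set 'I_n} | #|S| == l) F S.
Proof.
symmetry; exact: (@big_sub R 0 +%R _ (fun S : {set 'I_n} => #|S| == l) F).
Qed.

Lemma card_lt n (S T : {set 'I_n}) k : k \in T -> S \subset T :\ k -> (#|S| < #|T|)%N.
Proof.
move=> kT sub; rewrite (cardsD1 k T) kT add1n ltnS; exact: subset_leq_card.
Qed.

Section Main.
Variables (R : realFieldType) (n l : nat) (u : lvec R n l).

Definition U (S : {set 'I_n}) : R :=
  if (insub S : option (lsubset n l)) is Some s then u s else 0.

Lemma U_val (s : lsubset n l) : U (val s) = u s.
Proof. by rewrite /U valK. Qed.

Lemma U0 (S : {set 'I_n}) : #|S| != l -> U S = 0.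
Proof. by move=> H; rewrite /U insubN. Qed.

Lemma UU0 (S T : {set 'I_n}) : #|S| != #|T| -> U S * U T = 0.
Proof.
case: (eqVneq #|S| l) => [E|H] H2; last by rewrite U0 ?mul0r.
by rewrite (U0 (S := T)) ?mulr0 // -E eq_sym.
Qed.

Lemma sum_ext (F : {set 'I_n} -> R) : (forall S : {set 'I_n}, #|S| != l -> F S = 0) ->
  \sum_(s : lsubset n l) F (val s) = \sum_(S : {set 'I_n}) F S.
Proof.
move=> F0; rewrite sum_lsub [RHS](bigID (fun S : {set 'I_n} => #|S| == l)) /=.
by rewrite [X in _ = _ + X]big1 ?addr0 // => S; exact: F0.
Qed.

Lemma sqnormE : sqnorm u = \sum_(S : {set 'I_n}) U S ^+ 2.
Proof.
rewrite /sqnorm -(sum_ext (F := fun S => U S ^+ 2)).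
  by apply: eq_bigr => s _; rewrite U_val.
by move=> S /U0 ->; rewrite expr0n.
Qed.

Lemma votingE i j : voting u i j =
  if i == j then 0 else 2^-1 * \sum_(S : {set 'I_n}) U S * U (sd S [set i; j]).
Proof.
rewrite /voting mxE; case: eqP => // _; congr (_ * _).
transitivity (\sum_(s : lsubset n l) \sum_(T : {set 'I_n})
   (if sd (val s) T == [set i; j] then U (val s) * U T else 0)).
  apply: eq_bigr => s _.
  rewrite -(sum_ext (F := fun T => if sd (val s) T == [set i; j] then U (val s) * U T else 0)).
    by apply: eq_bigr => t _; rewrite !U_val.
  by move=> T /U0 ->; rewrite mulr0 if_same.
rewrite (sum_ext (F := fun S => \sum_(T : {set 'I_n}) (if sd S T == [set i; j] then U S * U T else 0))).
  by apply: eq_bigr => S _; rewrite (sum_sd S [set i; j] (fun T => U S * U T)).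
by move=> S /U0 ->; apply: big1 => T _; rewrite mul0r if_same.
Qed.

Definition a (A : {set 'I_n}) (i : 'I_n) : R := if i \in A then 0 else U (i |: A).

Lemma caseL i j : i != j ->
  \sum_(S : {set 'I_n} | (i \in S) && (j \notin S)) U S * U (sd S [set i; j]) = \sum_(A : {set 'I_n}) a A i * a A j.
Proof.
move=> ij.
rewrite big_mkcondr /= reindex1.
rewrite [RHS](bigID (fun A : {set 'I_n} => i \in A)) /= [X in _ = X + _]big1 ?add0r; last first.
  by move=> A HA; rewrite /a HA mul0r.
apply: eq_bigr => A HA.
rewrite /a (negbTE HA) in_setU1 eq_sym (negbTE ij) /=.
case: (boolP (j \in A)) => HjA /=; first by rewrite mulr0.
congr (_ * U _).
apply/setP => x; rewrite !inE.
have [->|xi] := eqVneq x i.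
  by rewrite /= (negbTE ij) (negbTE HA).
have [->|xj] := eqVneq x j; first by rewrite HjA.
by case: (x \in A).
Qed.

Lemma Mij i j : i != j ->
  \sum_(S : {set 'I_n}) U S * U (sd S [set i; j]) = 2 * \sum_(A : {set 'I_n}) a A i * a A j.
Proof.
move=> ij.
rewrite (bigID (fun S : {set 'I_n} => i \in S)) /=.
rewrite (bigID (fun S : {set 'I_n} => j \in S)) /=.
rewrite [X in _ + X = _](bigID (fun S : {set 'I_n} => j \in S)) /=.
rewrite caseL //.
have E : [set i; j] = [set j; i] by rewrite setUC.
have -> : \sum_(S : {set 'I_n} | (i \notin S) && (j \in S)) U S * U (sd S [set i; j])
   = \sum_(A : {set 'I_n}) a A i * a A j.
  rewrite E.
  rewrite (eq_bigl (fun S : {set 'I_n} => (j \in S) && (i \notin S))); last first.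
    by move=> S; rewrite andbC.
  rewrite caseL 1?eq_sym //.
  by apply: eq_bigr => A _; rewrite mulrC.
rewrite big1; last first.
  move=> S /andP [iS jS]; apply: UU0; rewrite eq_sym; apply/negbT; apply: ltn_eqF.
  apply: (card_lt (k := i)) => //; apply/subsetP => x; rewrite !inE.
  have [->|xi] := eqVneq x i; first by rewrite iS.
  have [->|xj] := eqVneq x j; first by rewrite jS.
  by case: (x \in S).
rewrite [X in _ + (_ + X)]big1; last first.
  move=> S /andP [iS jS]; apply: UU0; apply/negbT; apply: ltn_eqF.
  apply: (card_lt (k := i)); first by rewrite !inE eqxx (negbTE iS).
  apply/subsetP => x; rewrite !inE.
  have [->|xi] := eqVneq x i; first by rewrite (negbTE iS).
  have [->|xj] := eqVneq x j; first by rewrite (negbTE jS).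
  by case: (x \in S).
rewrite add0r addr0; ring.
Qed.

Definition M i j := \sum_(A : {set 'I_n}) a A i * a A j.

Lemma step1 : frob2 (voting u) <= \sum_i \sum_j M i j ^+ 2.
Proof.
rewrite /frob2; apply: ler_sum => i _; apply: ler_sum => j _.
rewrite votingE; case: eqP => [_|/eqP ne]; first by rewrite expr0n sqr_ge0.
by rewrite Mij // mulrA mulVf ?mul1r // pnatr_eq0.
Qed.

Lemma step2 : \sum_i \sum_j M i j ^+ 2 =
  \sum_(A : {set 'I_n}) \sum_(B : {set 'I_n}) (\sum_i a A i * a B i) ^+ 2.
Proof.
transitivity (\sum_i \sum_j \sum_(A : {set 'I_n}) \sum_(B : {set 'I_n})
   (a A i * a A j) * (a B i * a B j)).
  by apply: eq_bigr => i _; apply: eq_bigr => j _; rewrite /M expr2 big_distrlr.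
under eq_bigr => i _ do rewrite exchange_big.
rewrite exchange_big.
under eq_bigr => A _ do under eq_bigr => i _ do rewrite exchange_big.
under eq_bigr => A _ do rewrite exchange_big.
apply: eq_bigr => A _; apply: eq_bigr => B _.
rewrite expr2 big_distrlr; apply: eq_bigr => i _; apply: eq_bigr => j _.
rewrite /=.
ring.
Qed.

Lemma step3 : \sum_(A : {set 'I_n}) \sum_i a A i ^+ 2 = l%:R * \sum_(S : {set 'I_n}) U S ^+ 2.
Proof.
rewrite exchange_big /=.
transitivity (\sum_i \sum_(S : {set 'I_n} | i \in S) U S ^+ 2).
  apply: eq_bigr => i _; rewrite reindex1.
  rewrite (bigID (fun A : {set 'I_n} => i \in A)) /= big1 ?add0r; last first.
    by move=> A HA; rewrite /a HA expr0n.
  by apply: eq_bigr => A HA; rewrite /a (negbTE HA).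
rewrite (eq_bigr (fun i => \sum_(S : {set 'I_n}) (if i \in S then U S ^+ 2 else 0))); last first.
  by move=> i _; rewrite big_mkcond.
rewrite exchange_big /= mulr_sumr; apply: eq_bigr => S _.
rewrite -big_mkcond /= sumr_const.
case: (eqVneq #|S| l) => [->|H]; first by rewrite mulr_natl.
by rewrite U0 // expr0n mul0rn mulr0.
Qed.

Lemma main_bound : frob2 (voting u) <= (l ^ 2)%:R * sqnorm u ^+ 2.
Proof.
apply: (le_trans step1); rewrite step2.
apply: (le_trans (y := \sum_(A : {set 'I_n}) \sum_(B : {set 'I_n})
    (\sum_i a A i ^+ 2) * (\sum_i a B i ^+ 2))).
  apply: ler_sum => A _; apply: ler_sum => B _; exact: cauchy_schwarz.
rewrite -big_distrlr /= -expr2 step3 sqnormE exprMn natrX.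
by [].
Qed.

End Main.

Theorem lemma6 (R : realFieldType) (n l : nat) (hl1 : (1 <= l)%N) (hln : (l <= n)%N)
  (u : lvec R n l) :
  frob2 (voting u) <= (l ^ 2)%:R * sqnorm u ^+ 2.
Proof. exact: main_bound. Qed.
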